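(* Let $\Sigma\subseteq\mathcal L_{\Diamond\forall}$ be finite and closed under subformulas, let $\Lambda={\sf ITL}^0_{\Diamond\forall}$, let $(W_c,\preccurlyeq_c,S_c)$ be the canonical model of $\Lambda$, and let $\Pi=(\Pi^+,\Pi^-)$ be a universal $\Sigma$-profile. Let $W_c[\Pi]=\{\Phi\in W_c:\Pi^+\subseteq\Phi^+\text{ and }\Pi^-\subseteq\Phi^-\}$. Then $W_c[\Pi]$ is upward closed under $\preccurlyeq_c$, and $W_c[\Pi]$ is honest as a $\Sigma$-labelled structure: for every $\Phi\in W_c[\Pi]$ and every $\forall\varphi\in\Sigma$, if $\forall\varphi\in\Phi^+$ then $\varphi\in\Psi^+$ for every $\Psi\in W_c[\Pi]$, and if $\forall\varphi\in\Phi^-$ then $\varphi\in\Psi^-$ for some $\Psi\in W_c[\Pi]$.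
   Context: $\mathcal L_{\Diamond\forall}$: formulas $\varphi::=\bot\mid p\mid\varphi\wedge\varphi\mid\varphi\vee\varphi\mid\varphi\to\varphi\mid\circ\varphi\mid\Diamond\varphi\mid\forall\varphi$; $\neg\varphi:=\varphi\to\bot$, $\varphi\leftrightarrow\psi:=(\varphi\to\psi)\wedge(\psi\to\varphi)$. ${\sf ITL}^0_{\Diamond\forall}$ is the least set of $\mathcal L_{\Diamond\forall}$-formulas containing all substitution instances of the intuitionistic propositional axioms and of $\neg\circ\bot$, $\circ\varphi\wedge\circ\psi\to\circ(\varphi\wedge\psi)$, $\circ(\varphi\vee\psi)\to\circ\varphi\vee\circ\psi$, $\circ(\varphi\to\psi)\to(\circ\varphi\to\circ\psi)$, $\varphi\vee\circ\Diamond\varphi\to\Diamond\varphi$, $\forall\varphi\vee\neg\forall\varphi$, $\forall(\varphi\to\psi)\to(\forall\varphi\to\forall\psi)$, $\forall(\varphi\vee\forall\psi)\to\forall\varphi\vee\forall\psi$, $\forall\varphi\to\varphi$, $\forall\varphi\to\forall\forall\varphi$, $\forall\varphi\leftrightarrow\circ\forall\varphi$, closed under modus ponens, from $\varphi$ infer $\circ\varphi$, from $\varphi\to\psi$ infer $\Diamond\varphi\to\Diamond\psi$, from $\circ\varphi\to\varphi$ infer $\Diamond\varphi\to\varphi$, and from $\varphi$ infer $\forall\varphi$. $\Gamma\vdash\Delta$ means there are finite $\Gamma'\subseteq\Gamma$, $\Delta'\subseteq\Delta$ with $\bigwedge\Gamma'\to\bigvee\Delta'\in\Lambda$. A prime type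 is a pair $(\Phi^+,\Phi^-)$ of sets of $\mathcal L_{\Diamond\forall}$-formulas with $\Phi^+\cup\Phi^-=\mathcal L_{\Diamond\forall}$ and $\Phi^+\not\vdash\Phi^-$. Canonical model: $W_c$ is the set of prime types; $\Phi\preccurlyeq_c\Psi$ iff $\Phi^+\subseteq\Psi^+$ and $\Psi^-\subseteq\Phi^-$; $\Phi\mathrel{S_c}\Psi$ iff $(\Phi,\Psi)$ is sensible ($\circ\varphi\in\Phi^\pm\Rightarrow\varphi\in\Psi^\pm$; $\Diamond\varphi\in\Phi^+\Rightarrow\varphi\in\Phi^+$ or $\Diamond\varphi\in\Psi^+$; $\Diamond\varphi\in\Phi^-\Rightarrow\Diamond\varphi\in\Psi^-$; $\forall\varphi\in\Phi^\pm\Leftrightarrow\forall\varphi\in\Psi^\pm$). $\Sigma_\forall$ denotes the set of formulas in $\Sigma$ of the form $\forall\varphi$; a universal $\Sigma$-profile is a partition $(\Pi^+,\Pi^-)$ of $\Sigma_\forall$. *)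

(* Defs.v *)
From Stdlib Require Import List.
Import ListNotations.

Inductive form : Type :=
| Bot : form
| Var : nat -> form
| And : form -> form -> form
| Or  : form -> form -> form
| Imp : form -> form -> form
| Next : form -> form
| Dia : form -> form
| All : form -> form.

Definition Neg (a : form) : form := Imp a Bot.
Definition Iff (a b : form) : form := And (Imp a b) (Imp b a).
Definition Top : form := Imp Bot Bot.

(* The intuitionistic propositional axioms are given
   by a standard Hilbert axiomatisation of IPC as schemata (every instance by
   arbitrary formulas), which is the same as all substitution instances. *)
Inductive prov : form -> Prop :=
| ax_k a b : prov (Imp a (Imp b a))
| ax_s a b c : prov (Imp (Imp a (Imp b c)) (Imp (Imp a b) (Imp a c)))
| ax_andl a b : prov (Imp (And a b) a)
| ax_andr a b : prov (Imp (And a b) b)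
| ax_andi a b : prov (Imp a (Imp b (And a b)))
| ax_orl a b : prov (Imp a (Or a b))
| ax_orr a b : prov (Imp b (Or a b))
| ax_ore a b c : prov (Imp (Imp a c) (Imp (Imp b c) (Imp (Or a b) c)))
| ax_efq a : prov (Imp Bot a)
| ax_nextbot : prov (Neg (Next Bot))
| ax_nextand a b : prov (Imp (And (Next a) (Next b)) (Next (And a b)))
| ax_nextor a b : prov (Imp (Next (Or a b)) (Or (Next a) (Next b)))
| ax_nextimp a b : prov (Imp (Next (Imp a b)) (Imp (Next a) (Next b)))
| ax_diafix a : prov (Imp (Or a (Next (Dia a))) (Dia a))
| ax_allem a : prov (Or (All a) (Neg (All a)))
| ax_allk a b : prov (Imp (All (Imp a b)) (Imp (All a) (All b)))
| ax_allor a b : prov (Imp (All (Or a (All b))) (Or (All a) (All b)))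
| ax_allt a : prov (Imp (All a) a)
| ax_all4 a : prov (Imp (All a) (All (All a)))
| ax_allnext a : prov (Iff (All a) (Next (All a)))
| r_mp a b : prov (Imp a b) -> prov a -> prov b
| r_nec a : prov a -> prov (Next a)
| r_diamon a b : prov (Imp a b) -> prov (Imp (Dia a) (Dia b))
| r_diaind a : prov (Imp (Next a) a) -> prov (Imp (Dia a) a)
| r_allnec a : prov a -> prov (All a).

Definition Lambda : form -> Prop := prov.

Definition fset := form -> Prop.

Fixpoint conjl (l : list form) : form :=
  match l with [] => Top | a :: l' => And a (conjl l') end.
Fixpoint disjl (l : list form) : form :=
  match l with [] => Bot | a :: l' => Or a (disjl l') end.

Definition entails (G D : fset) : Prop :=
  exists (G' D' : list form),
    (forall a, In a G' -> G a) /\ (forall a, In a D' -> D a) /\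
    Lambda (Imp (conjl G') (disjl D')).

(* types: pairs (Phi+, Phi-) *)
Definition ftype := (fset * fset)%type.

Definition prime_type (P : ftype) : Prop :=
  (forall a, fst P a \/ snd P a) /\ ~ entails (fst P) (snd P).

Definition Wc (P : ftype) : Prop := prime_type P.

Definition prec_c (P Q : ftype) : Prop :=
  (forall a, fst P a -> fst Q a) /\ (forall a, snd Q a -> snd P a).

Definition sensible (P Q : ftype) : Prop :=
  (forall a, fst P (Next a) -> fst Q a) /\
  (forall a, snd P (Next a) -> snd Q a) /\
  (forall a, fst P (Dia a) -> fst P a \/ fst Q (Dia a)) /\
  (forall a, snd P (Dia a) -> snd Q (Dia a)) /\
  (forall a, fst P (All a) <-> fst Q (All a)) /\
  (forall a, snd P (All a) <-> snd Q (All a)).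

Definition S_c (P Q : ftype) : Prop := sensible P Q.

Definition subformula_closed (S : list form) : Prop :=
  (forall a b, In (And a b) S -> In a S /\ In b S) /\
  (forall a b, In (Or a b) S -> In a S /\ In b S) /\
  (forall a b, In (Imp a b) S -> In a S /\ In b S) /\
  (forall a, In (Next a) S -> In a S) /\
  (forall a, In (Dia a) S -> In a S) /\
  (forall a, In (All a) S -> In a S).

Definition is_all (a : form) : Prop := exists b, a = All b.
Definition Sigma_all (S : list form) (a : form) : Prop := In a S /\ is_all a.

Definition universal_profile (S : list form) (Pi : ftype) : Prop :=
  (forall a, fst Pi a \/ snd Pi a <-> Sigma_all S a) /\
  (forall a, ~ (fst Pi a /\ snd Pi a)).

Definition Wc_Pi (Pi : ftype) (P : ftype) : Prop :=
  Wc P /\ (forall a, fst Pi a -> fst P a) /\ (forall a, snd Pi a -> snd P a).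

(* Main.v *)
Require Import Defs.
From Stdlib Require Import List Classical Cantor PeanoNat Lia.
Import ListNotations.

Inductive pf (G : list form) : form -> Prop :=
| pf_hyp a : In a G -> pf G a
| pf_ax a : prov a -> pf G a
| pf_mp a b : pf G (Imp a b) -> pf G a -> pf G b.
Arguments pf_hyp {G a}.
Arguments pf_ax {G a}.
Arguments pf_mp {G a b}.

Lemma prov_I a : prov (Imp a a).
Proof. exact (r_mp _ _ (r_mp _ _ (ax_s a (Imp a a) a) (ax_k a (Imp a a))) (ax_k a a)). Qed.

Lemma pf_ded G a b : pf (b :: G) a -> pf G (Imp b a).
Proof.
  induction 1 as [a H|a H|a c _ IH1 _ IH2].
  - destruct H as [<-|H]. apply pf_ax, prov_I.
    exact (pf_mp (pf_ax (ax_k _ _)) (pf_hyp H)).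
  - exact (pf_mp (pf_ax (ax_k _ _)) (pf_ax H)).
  - exact (pf_mp (pf_mp (pf_ax (ax_s _ _ _)) IH1) IH2).
Qed.

Lemma pf_subst G H a : pf G a -> (forall g, In g G -> pf H g) -> pf H a.
Proof.
  induction 1; intros K; auto. apply pf_ax; auto. eapply pf_mp; eauto.
Qed.

Lemma pf_weak G H a : pf G a -> (forall g, In g G -> In g H) -> pf H a.
Proof. intros P K. apply (pf_subst _ _ _ P). intros; apply pf_hyp; auto. Qed.

Lemma pf_nil a : pf [] a -> prov a.
Proof. induction 1; [destruct H|auto|eapply r_mp; eauto]. Qed.

Lemma prov_pf a b : prov (Imp a b) <-> pf [a] b.
Proof.
  split; intro H.
  - apply (pf_mp (pf_ax H)), pf_hyp; simpl; auto.
  - apply pf_nil, pf_ded, H.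
Qed.

Lemma pf_top G : pf G Top.
Proof. apply pf_ax, prov_I. Qed.

Lemma pf_andi G a b : pf G a -> pf G b -> pf G (And a b).
Proof. intros A B. exact (pf_mp (pf_mp (pf_ax (ax_andi a b)) A) B). Qed.

Lemma pf_conjl G : pf G (conjl G).
Proof.
  assert (forall L, (forall g, In g L -> In g G) -> pf G (conjl L)).
  { induction L; simpl; intros. apply pf_top. apply pf_andi; auto.
    apply pf_hyp; auto. }
  apply H; auto.
Qed.

Lemma conjl_in G g : In g G -> prov (Imp (conjl G) g).
Proof.
  induction G; simpl. tauto.
  intros [<-|H]. apply ax_andl.
  apply prov_pf. apply (pf_mp (pf_ax (IHG H))).
  apply (pf_mp (pf_ax (ax_andr a _))), pf_hyp; simpl; auto.
Qed.

Lemma ent_pf G X : prov (Imp (conjl G) X) <-> pf G X.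
Proof.
  split; intro H.
  - exact (pf_mp (pf_ax H) (pf_conjl G)).
  - apply prov_pf. apply (pf_subst _ _ _ H). intros g Hg.
    apply prov_pf, conjl_in, Hg.
Qed.

Lemma disjl_intro D y : In y D -> prov (Imp y (disjl D)).
Proof.
  induction D; simpl. tauto.
  intros [<-|H]. apply ax_orl.
  apply prov_pf. apply (pf_mp (pf_ax (ax_orr _ _))).
  apply (pf_mp (pf_ax (IHD H))), pf_hyp; simpl; auto.
Qed.

Lemma disjl_elim G D c : pf G (disjl D) -> (forall y, In y D -> pf (y :: G) c) -> pf G c.
Proof.
  revert G. induction D; simpl; intros G H K.
  - exact (pf_mp (pf_ax (ax_efq _)) H).
  - eapply pf_mp; [eapply pf_mp; [eapply pf_mp|]|]; [apply pf_ax, ax_ore| | |exact H].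
    + apply pf_ded, K; auto.
    + apply pf_ded. apply IHD. apply pf_hyp; simpl; auto.
      intros y Hy. apply pf_weak with (y :: G). apply K; auto.
      simpl; tauto.
Qed.

Lemma disjl_weak G D D' : pf G (disjl D) -> (forall y, In y D -> In y D') -> pf G (disjl D').
Proof.
  intros H K. apply (disjl_elim _ _ _ H). intros y Hy.
  apply (pf_mp (pf_ax (disjl_intro _ _ (K _ Hy)))), pf_hyp; simpl; auto.
Qed.

Definition ent (G D : fset) : Prop :=
  exists (G' D' : list form),
    (forall a, In a G' -> G a) /\ (forall a, In a D' -> D a) /\ pf G' (disjl D').

Lemma ent_iff G D : entails G D <-> ent G D.
Proof.
  unfold entails, ent, Lambda; split; intros (G' & D' & A & B & C);
  exists G', D'; repeat split; auto; apply ent_pf; auto.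
Qed.

Definition form_eq_dec : forall x y : form, {x = y} + {x <> y}.
Proof. decide equality; apply Nat.eq_dec. Defined.

Lemma in_rem x y l : In y l -> y = x \/ In y (remove form_eq_dec x l).
Proof.
  intros H. destruct (form_eq_dec y x). auto. right. apply in_in_remove; auto.
Qed.

Lemma cut G D x : entails G (fun y => D y \/ y = x) ->
  entails (fun y => G y \/ y = x) D -> entails G D.
Proof.
  rewrite !ent_iff. intros (G1 & D1 & A1 & B1 & C1) (G2 & D2 & A2 & B2 & C2).
  exists (G1 ++ remove form_eq_dec x G2), (remove form_eq_dec x D1 ++ D2).
  split; [|split].
  - intros a Ha. apply in_app_or in Ha as [Ha|Ha]; auto.
    apply in_remove in Ha as [Ha Hn]. destruct (A2 _ Ha); congruence.
  - intros a Ha. apply in_app_or in Ha as [Ha|Ha]; auto.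
    apply in_remove in Ha as [Ha Hn]. destruct (B1 _ Ha); congruence.
  - assert (E1 : pf G1 (Or x (disjl (remove form_eq_dec x D1)))).
    { apply (disjl_elim _ _ _ C1). intros y Hy.
      destruct (in_rem x _ _ Hy) as [->|Hr].
      - apply (pf_mp (pf_ax (ax_orl _ _))), pf_hyp; simpl; auto.
      - apply (pf_mp (pf_ax (ax_orr _ _))).
        apply (pf_mp (pf_ax (disjl_intro _ _ Hr))), pf_hyp; simpl; auto. }
    assert (E2 : pf (remove form_eq_dec x G2) (Imp x (disjl D2))).
    { apply pf_ded. apply (pf_weak _ _ _ C2). intros g Hg. simpl.
      destruct (in_rem x _ _ Hg); auto. }
    set (T := disjl (remove form_eq_dec x D1 ++ D2)).
    eapply pf_mp; [eapply pf_mp; [eapply pf_mp|]|]; [apply pf_ax, ax_ore| | |].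
    + apply pf_ded. apply disjl_weak with D2.
      apply (pf_mp (a := x)). apply pf_weak with (1 := E2).
      intros; simpl; rewrite in_app_iff; auto.
      apply pf_hyp; simpl; auto.
      intros; rewrite in_app_iff; auto.
    + apply pf_ded. apply disjl_weak with (remove form_eq_dec x D1).
      apply pf_hyp; simpl; auto. intros; rewrite in_app_iff; auto.
    + apply pf_weak with (1 := E1). intros; rewrite in_app_iff; auto.
Qed.

Fixpoint enc (f : form) : nat :=
  match f with
  | Bot => to_nat (0, 0)
  | Var n => to_nat (1, n)
  | And a b => to_nat (2, to_nat (enc a, enc b))
  | Or a b => to_nat (3, to_nat (enc a, enc b))
  | Imp a b => to_nat (4, to_nat (enc a, enc b))
  | Next a => to_nat (5, enc a)
  | Dia a => to_nat (6, enc a)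
  | All a => to_nat (7, enc a)
  end.

Lemma to_nat_inj p q : to_nat p = to_nat q -> p = q.
Proof. intros H. rewrite <- (cancel_of_to p), <- (cancel_of_to q), H. auto. Qed.

Lemma to_nat_inj2 a b c d : to_nat (a, b) = to_nat (c, d) -> a = c /\ b = d.
Proof. intros H. apply to_nat_inj in H. inversion H; auto. Qed.

Lemma enc_inj f g : enc f = enc g -> f = g.
Proof.
  revert g; induction f; destruct g; cbn [enc]; intros H; try reflexivity;
  apply to_nat_inj2 in H; destruct H as [H1 H2]; try discriminate;
  try (apply to_nat_inj2 in H2; destruct H2 as [H2 H3]);
  f_equal; auto.
Qed.

Fixpoint chain (G D : fset) (n : nat) : ftype :=
  match n with
  | 0 => (G, D)
  | S n => let Gn := fst (chain G D n) in let Dn := snd (chain G D n) in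
    (fun x => Gn x \/ (enc x = n /\ ~ entails (fun y => Gn y \/ y = x) Dn),
     fun x => Dn x \/ (enc x = n /\ entails (fun y => Gn y \/ y = x) Dn))
  end.

Lemma ent_mono G D G' D' : entails G D -> (forall x, G x -> G' x) -> (forall x, D x -> D' x) -> entails G' D'.
Proof.
  intros (A & B & H1 & H2 & H3) K L. exists A, B; auto.
Qed.

Lemma chain_cons G D n : ~ entails G D -> ~ entails (fst (chain G D n)) (snd (chain G D n)).
Proof.
  intros H0. induction n; simpl; auto.
  set (Gn := fst (chain G D n)) in *. set (Dn := snd (chain G D n)) in *.
  intros E.
  destruct (classic (exists x, enc x = n)) as [[x0 Hx]|Hno].
  - destruct (classic (entails (fun y => Gn y \/ y = x0) Dn)) as [Ex|Nx].
    + apply IHn. apply (cut _ _ x0); auto.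
      apply (ent_mono _ _ _ _ E).
      * intros x [H|[H1 H2]]; auto. exfalso. assert (x = x0) by (apply enc_inj; congruence).
        subst; tauto.
      * intros x [H|[H1 H2]]; auto. right. apply enc_inj; congruence.
    + apply Nx. apply (ent_mono _ _ _ _ E).
      * intros x [H|[H1 H2]]; auto. right. apply enc_inj; congruence.
      * intros x [H|[H1 H2]]; auto. exfalso. assert (x = x0) by (apply enc_inj; congruence).
        subst; tauto.
  - apply IHn. apply (ent_mono _ _ _ _ E).
    + intros x [H|[H1 H2]]; auto. exfalso; eauto.
    + intros x [H|[H1 H2]]; auto. exfalso; eauto.
Qed.

Lemma chain_mono G D n m : n <= m ->
  (forall x, fst (chain G D n) x -> fst (chain G D m) x) /\
  (forall x, snd (chain G D n) x -> snd (chain G D m) x).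
Proof.
  induction 1; auto. destruct IHle as [A B]; simpl; split; intros; auto.
Qed.

Lemma list_bound (F : nat -> fset) (mono : forall n m x, n <= m -> F n x -> F m x) l :
  (forall x, In x l -> exists n, F n x) -> exists N, forall x, In x l -> F N x.
Proof.
  induction l; simpl; intros H. exists 0; tauto.
  destruct (H a (or_introl eq_refl)) as [n Hn].
  destruct IHl as [N HN]; auto.
  exists (Nat.max n N). intros x [<-|Hx].
  apply (mono n); auto; lia. apply (mono N); auto; lia.
Qed.

Lemma lindenbaum G D : ~ entails G D ->
  exists Q : ftype, prime_type Q /\ (forall x, G x -> fst Q x) /\ (forall x, D x -> snd Q x).
Proof.
  intros H0.
  exists (fun x => exists n, fst (chain G D n) x, fun x => exists n, snd (chain G D n) x).
  split; [split|split]; simpl.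
  - intros a. destruct (classic (entails (fun y => fst (chain G D (enc a)) y \/ y = a)
                                  (snd (chain G D (enc a))))).
    + right. exists (S (enc a)); simpl; auto.
    + left. exists (S (enc a)); simpl; auto.
  - intros (G' & D' & A & B & C).
    destruct (list_bound (fun n => fst (chain G D n)) (fun n m x h => proj1 (chain_mono G D n m h) x) G' A) as [N1 H1].
    destruct (list_bound (fun n => snd (chain G D n)) (fun n m x h => proj2 (chain_mono G D n m h) x) D' B) as [N2 H2].
    apply (chain_cons G D (Nat.max N1 N2) H0). exists G', D'; split; [|split]; auto.
    + intros x Hx. eapply (proj1 (chain_mono G D N1 _ (Nat.le_max_l _ _))); auto.
    + intros x Hx. eapply (proj2 (chain_mono G D N2 _ (Nat.le_max_r _ _))); auto.
  - intros x Hx; exists 0; auto.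
  - intros x Hx; exists 0; auto.
Qed.

Lemma pf_or_elim G a b c : pf G (Or a b) -> pf (a :: G) c -> pf (b :: G) c -> pf G c.
Proof.
  intros H A B.
  exact (pf_mp (pf_mp (pf_mp (pf_ax (ax_ore a b c)) (pf_ded _ _ _ A)) (pf_ded _ _ _ B)) H).
Qed.

Lemma prime_not_both Q c : prime_type Q -> fst Q c -> snd Q c -> False.
Proof.
  intros [_ N] A B. apply N, ent_iff. exists [c], [c]. split; [|split].
  - intros a [<-|[]]; auto.
  - intros a [<-|[]]; auto.
  - simpl. apply (pf_mp (pf_ax (ax_orl c Bot))). apply pf_hyp; simpl; auto.
Qed.

Lemma prime_neg Q c : prime_type Q -> fst Q (Neg c) -> fst Q c -> False.
Proof.
  intros [_ N] A B. apply N, ent_iff. exists [c; Neg c], []. split; [|split].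
  - intros a [<-|[<-|[]]]; auto.
  - intros a [].
  - simpl. apply (pf_mp (a := c)); apply pf_hyp; simpl; auto.
Qed.

Lemma prime_all_neg Q b : prime_type Q -> snd Q (All b) -> fst Q (Neg (All b)).
Proof.
  intros [P N] A. destruct (P (Neg (All b))) as [H|H]; auto. exfalso.
  apply N, ent_iff. exists [], [All b; Neg (All b)]. split; [|split].
  - intros a [].
  - intros a [<-|[<-|[]]]; auto.
  - simpl. apply (pf_or_elim _ _ _ _ (pf_ax (ax_allem b))).
    + apply (pf_mp (pf_ax (ax_orl _ _))), pf_hyp; simpl; auto.
    + apply (pf_mp (pf_ax (ax_orr _ _))). apply (pf_mp (pf_ax (ax_orl _ Bot))), pf_hyp; simpl; auto.
Qed.

Lemma negstab b : prov (Imp (Neg (All b)) (All (Neg (All b)))).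
Proof.
  assert (H : prov (Or (Neg (All b)) (All b))).
  { apply pf_nil. apply (pf_or_elim _ _ _ _ (pf_ax (ax_allem b))).
    + apply (pf_mp (pf_ax (ax_orr _ _))), pf_hyp; simpl; auto.
    + apply (pf_mp (pf_ax (ax_orl _ _))), pf_hyp; simpl; auto. }
  apply prov_pf.
  apply (pf_or_elim _ _ _ _ (pf_ax (r_mp _ _ (ax_allor (Neg (All b)) b) (r_allnec _ H)))).
  - apply pf_hyp; simpl; auto.
  - apply (pf_mp (pf_ax (ax_efq _))). apply (pf_mp (a := All b)); apply pf_hyp; simpl; auto.
Qed.

Lemma all_conj H L : (forall g, In g L -> pf H (All g)) -> pf H (All (conjl L)).
Proof.
  induction L as [|a L IH]; simpl; intros K.
  - apply pf_ax, r_allnec, prov_I.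
  - refine (pf_mp (pf_mp (pf_ax (ax_allk (conjl L) (And a (conjl L)))) _) (IH _)); auto.
    exact (pf_mp (pf_mp (pf_ax (ax_allk a _)) (pf_ax (r_allnec _ (ax_andi a (conjl L))))) (K _ (or_introl eq_refl))).
Qed.

Lemma all_lift G x : pf G x -> (forall g, In g G -> pf G (All g)) -> pf G (All x).
Proof.
  intros H K. apply ent_pf in H.
  exact (pf_mp (pf_ax (r_mp _ _ (ax_allk _ _) (r_allnec _ H))) (all_conj _ _ K)).
Qed.

Theorem lemma9p3 (Sigma : list form) (Pi : ftype) :
  subformula_closed Sigma ->
  universal_profile Sigma Pi ->
  (* upward closure *)
  (forall P Q : ftype, Wc_Pi Pi P -> Wc Q -> prec_c P Q -> Wc_Pi Pi Q) /\
  (* honesty *)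
  (forall P : ftype, Wc_Pi Pi P ->
     forall a : form, In (All a) Sigma ->
       (fst P (All a) -> forall Q : ftype, Wc_Pi Pi Q -> fst Q a) /\
       (snd P (All a) -> exists Q : ftype, Wc_Pi Pi Q /\ snd Q a)).
Proof.
  intros _ [Hprof Hdisj].
  assert (sigs : forall c, snd Pi c -> exists b, c = All b).
  { intros c Hc. assert (Hc' : Sigma_all Sigma c) by (apply Hprof; auto). destruct Hc' as [_ [b ->]]; eauto. }
  assert (sigf : forall c, fst Pi c -> exists b, c = All b).
  { intros c Hc. assert (Hc' : Sigma_all Sigma c) by (apply Hprof; auto). destruct Hc' as [_ [b ->]]; eauto. }
  split.
  - intros P Q [WP [H1 H2]] WQ [L1 L2]. split; [auto|split]; auto.
    intros c Hc. destruct (sigs c Hc) as [b ->].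
    pose proof (L1 _ (prime_all_neg P b WP (H2 _ Hc))) as Hn.
    destruct (proj1 WQ (All b)) as [Hf|Hs]; auto. exfalso; exact (prime_neg Q _ WQ Hn Hf).
  - intros P [WP [H1 H2]] a Ha.
    assert (Hsa : fst Pi (All a) \/ snd Pi (All a)).
    { apply Hprof. split; auto. exists a; auto. }
    split.
    + intros Hf Q [WQ [Q1 Q2]]. destruct Hsa as [Hf'|Hs'].
      * destruct (proj1 WQ a) as [|Hs]; auto. exfalso.
        apply (proj2 WQ), ent_iff. exists [All a], [a]. split; [|split].
        -- intros x [<-|[]]; auto.
        -- intros x [<-|[]]; auto.
        -- simpl. apply (pf_mp (pf_ax (ax_orl a Bot))).
           apply (pf_mp (pf_ax (ax_allt a))), pf_hyp; simpl; auto.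
      * exfalso. exact (prime_not_both P _ WP Hf (H2 _ Hs')).
    + intros Hs.
      set (Gam := fun x => fst Pi x \/ exists c, snd Pi c /\ x = Neg c).
      set (Del := fun x => x = a).
      assert (NE : ~ entails Gam Del).
      { rewrite ent_iff. intros (G' & D' & A & B & C).
        assert (Ca : pf G' a).
        { apply (disjl_elim _ _ _ C). intros y Hy. rewrite (B _ Hy). apply pf_hyp; simpl; auto. }
        assert (Call : pf G' (All a)).
        { apply all_lift; auto. intros g Hg. destruct (A g Hg) as [Hf|[c [Hc ->]]].
          - destruct (sigf g Hf) as [b ->]. apply (pf_mp (pf_ax (ax_all4 b))), pf_hyp; auto.
          - destruct (sigs c Hc) as [b ->]. apply (pf_mp (pf_ax (negstab b))), pf_hyp; auto. }
        apply (proj2 WP), ent_iff. exists G', [All a]. split; [|split].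
        - intros g Hg. destruct (A g Hg) as [Hf|[c [Hc ->]]]; auto.
          destruct (sigs c Hc) as [b ->]. apply prime_all_neg; auto.
        - intros x [<-|[]]; auto.
        - simpl. apply (pf_mp (pf_ax (ax_orl _ Bot))); auto. }
      destruct (lindenbaum _ _ NE) as (Q & WQ & QG & QD).
      exists Q. split; [split; [|split]|].
      * exact WQ.
      * intros x Hx. apply QG. left; auto.
      * intros c Hc. assert (Hn : fst Q (Neg c)) by (apply QG; right; eauto).
        destruct (proj1 WQ c) as [Hf|]; auto. exfalso; exact (prime_neg Q _ WQ Hn Hf).
      * apply QD. reflexivity.
Qed.
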